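(* For every graph $G$, $\mu\text{-}tw(G)=\alpha\text{-}tw(L^2(G))$.
   Context: All graphs are finite and simple. $L^2(G)$ is the graph with vertex set $E(G)$ in which two distinct edges $e,f$ of $G$ are adjacent iff their distance in the line graph $L(G)$ is at most $2$, equivalently iff $G[e\cup f]$ is connected (they share a vertex, or some edge of $G$ meets both). A tree decomposition of a graph $G$ is a tree $T$ with bags $B_t\subseteq V(G)$ such that the nodes containing any given vertex induce a connected subtree and every edge lies in some bag. An induced matching is a set $M$ of pairwise disjoint edges such that the subgraph induced by their endpoints has exactly the edges of $M$. For $S\subseteq V(G)$: $\mu_G(S)$ is the maximum size of an induced matching of $G$ all of whose edges intersect $S$; $\alpha_G(S)$ is the maximum size of an independent set of $G$ contained in $S$. For $\lambda\in\{\mu,\alpha\}$, $\lambda_G(\mathcal{T})=\max_t\lambda_G(B_t)$ and $\lambda\text{-}tw(G)$ is its minimum over all tree decompositions $\mathcal{T}$ of $G$. *)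

(* Defs.v *)
From mathcomp Require Import all_boot.
From Stdlib Require Import ClassicalEpsilon.
Set Implicit Arguments. Unset Strict Implicit. Unset Printing Implicit Defensive.

(* A finite simple graph is a vertex type V : finType with an adjacency
   relation adj : rel V that is symmetric and irreflexive (hypotheses of the
   theorem). *)

Section Graphs.
Variable V : finType.
Variable adj : rel V.

Definition is_edge (A : {set V}) : bool :=
  [exists x, exists y, adj x y && (A == [set x; y])].

Definition edge_type := {A : {set V} | is_edge A}.

Definition independent (S : {set V}) : bool :=
  [forall x in S, forall y in S, ~~ adj x y].

Definition alpha (S : {set V}) : nat :=
  \max_(I : {set V} | independent I && (I \subset S)) #|I|.

Definition induced_matching (M : {set {set V}}) : bool :=
  [forall A in M, is_edge A] &&
  [forall A in M, forall B in M, (A != B) ==> [disjoint A & B]] &&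
  [forall x, forall y, ((x \in cover M) && (y \in cover M) && adj x y)
                         ==> ([set x; y] \in M)].

Definition mu (S : {set V}) : nat :=
  \max_(M : {set {set V}} | induced_matching M &&
          [forall A in M, ~~ [disjoint A & S]]) #|M|.

End Graphs.

Definition L2adj (V : finType) (adj : rel V) : rel (edge_type adj) :=
  fun e f =>
    (e != f) &&
    (~~ [disjoint val e & val f] ||
     [exists g : edge_type adj,
        ~~ [disjoint val g & val e] && ~~ [disjoint val g & val f]]).

Arguments L2adj {V} adj _ _.

Definition is_tree (I : finType) (tE : rel I) : Prop :=
  [/\ #|I| > 0, symmetric tE, irreflexive tE,
      (forall x y, connect tE x y) &
      (forall x p, path tE x p -> uniq (x :: p) -> 2 <= size p ->
                   ~~ tE (last x p) x)].

Definition is_tree_decomposition (V : finType) (adj : rel V)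
  (I : finType) (tE : rel I) (B : I -> {set V}) : Prop :=
  [/\ is_tree tE,
      (forall v, exists t, v \in B t),
      (forall x y, adj x y -> exists t, (x \in B t) && (y \in B t)) &
      (forall v t1 t2, v \in B t1 -> v \in B t2 ->
         connect [rel a b | [&& tE a b, v \in B a & v \in B b]] t1 t2)].

Definition has_width_at_most (V : finType) (adj : rel V)
  (lam : {set V} -> nat) (k : nat) : Prop :=
  exists (I : finType) (tE : rel I) (B : I -> {set V}),
    is_tree_decomposition adj tE B /\ forall t, lam (B t) <= k.

Lemma has_width_exists (V : finType) (adj : rel V) (lam : {set V} -> nat) :
  exists k, has_width_at_most adj lam k.
Proof.
exists (lam setT), unit, [rel _ _ | false], (fun _ => setT).
split; last by [].
split.
- split.
  + by rewrite card_unit.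
  + by move=> ? ?.
  + by move=> ?.
  + by move=> [] []; exact: connect0.
  + by move=> x [|a [|b p]].
- by move=> v; exists tt; rewrite inE.
- by move=> x y _; exists tt; rewrite !inE.
- by move=> v [] [] _ _; exact: connect0.
Qed.

(* is_min_width adj lam k <-> k is the least width of a tree decomposition;
   such a k exists (has_width_exists + well-ordering of nat). *)
Definition is_min_width (V : finType) (adj : rel V) (lam : {set V} -> nat)
  (k : nat) : Prop :=
  has_width_at_most adj lam k /\ forall j, has_width_at_most adj lam j -> k <= j.

Definition lam_tw (V : finType) (adj : rel V) (lam : {set V} -> nat) : nat :=
  epsilon (inhabits 0) (is_min_width adj lam).

Definition mu_tw (V : finType) (adj : rel V) : nat := lam_tw adj (mu adj).
Definition alpha_tw (V : finType) (adj : rel V) : nat := lam_tw adj (alpha adj).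

(* Main.v *)
Require Import Defs.
From mathcomp Require Import all_boot.
From Stdlib Require Import ClassicalEpsilon Classical.
Set Implicit Arguments. Unset Strict Implicit. Unset Printing Implicit Defensive.

Section TreeFacts.
Variable I : finType.
Variable tE : rel I.
Hypothesis tree : is_tree tE.

Definition rrel (P : pred I) : rel I := [rel a b | [&& tE a b, P a & P b]].
Definition subtree (P : pred I) := forall u v, P u -> P v -> connect (rrel P) u v.

Lemma tsym : symmetric tE. Proof. by case: tree. Qed.
Lemma tirr : irreflexive tE. Proof. by case: tree. Qed.

Lemma path_rrel P x p : path tE x p -> all P (x :: p) -> path (rrel P) x p.
Proof.
elim: p x => [|y p IH] x //= /andP[hxy hp] /and3P[hx hy hall].
rewrite /= {1}/rrel /= hxy hx hy /=; apply: IH => //=; by rewrite hy.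
Qed.

Lemma conn_of_path P x p : path tE x p -> all P (x :: p) ->
  connect (rrel P) x (last x p).
Proof. by move=> hp ha; apply/connectP; exists p => //; apply: path_rrel. Qed.

Lemma rrel_path P x p : path (rrel P) x p -> path tE x p /\ all P p.
Proof.
elim: p x => [|y p IH] x //= /andP[/and3P[hxy hx hy] hp].

by case: (IH _ hp) => h1 h2; rewrite hxy h1 hy h2.
Qed.

Lemma tree_upath x y : exists p, [/\ path tE x p, uniq (x :: p) & last x p = y].
Proof.
case: tree => _ _ _ hc _.
case/connectP: (hc x y) => p hp ->.
by case/shortenP: hp => p' hp' up' _; exists p'.
Qed.

Lemma bridge x a q r : tE x a -> path tE x q -> a \notin x :: q ->
  path tE a r -> x \notin a :: r -> last x q = last a r -> False.
Proof.
move=> hxa hq haq hr hxr hl.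
pose e' := [rel u v | [&& tE u v, ~~ ((u == x) && (v == a)) & ~~ ((u == a) && (v == x))]].
have sym' : symmetric e'.
  move=> u v; rewrite /= tsym.
  by case: (u == x); case: (u == a); case: (v == x); case: (v == a); rewrite /= ?andbT ?andbF.
have s1 : forall P : pred I, (forall u, P u -> u != a) -> subrel (rrel P) e'.
  move=> P hP u v /and3P[huv hu hv]; rewrite /= huv /=.
  by rewrite (negbTE (hP _ hu)) (negbTE (hP _ hv)) ?andbF ?andFb.
have s2 : forall P : pred I, (forall u, P u -> u != x) -> subrel (rrel P) e'.
  move=> P hP u v /and3P[huv hu hv]; rewrite /= huv /=.
  by rewrite (negbTE (hP _ hu)) (negbTE (hP _ hv)) ?andbF ?andFb.
have c1 : connect e' x (last x q).
  apply: (connect_sub (e := rrel (fun u => u != a))).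
    by move=> u v h; apply: connect1; apply: (s1 _ _ u v h).
  apply: conn_of_path => //; apply/allP => u hu; apply/eqP => hua.
  by move: haq; rewrite -hua hu.
have c2 : connect e' a (last a r).
  apply: (connect_sub (e := rrel (fun u => u != x))).
    by move=> u v h; apply: connect1; apply: (s2 _ _ u v h).
  apply: conn_of_path => //; apply/allP => u hu; apply/eqP => hux.
  by move: hxr; rewrite -hux hu.
have c : connect e' x a.
  apply: (connect_trans c1); rewrite hl (sym_connect_sym sym') //.
case/connectP: c => p hp hla.
move: hla; case/shortenP: hp => s hs us _ hla.
case: tree => _ _ _ _ hac.
case: s hs us hla => [|b [|c s]] /= hs us hla.
- by move: hxa; rewrite hla tirr.
- by move: hs; rewrite -hla /= !eqxx /= !andbF.
- have hs' : path tE x [:: b, c & s].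
    apply: (@sub_path _ e') => // u v /andP[] //.
  have := hac x [:: b, c & s] hs' us isT.
  by rewrite /= -hla tsym hxa.
Qed.

Lemma subtree_upath P x p : subtree P -> path tE x p -> uniq (x :: p) ->
  P x -> P (last x p) -> all P (x :: p).
Proof.
move=> hP; elim: p x => [|a p IH] x /=; first by move=> _ _ ->.
move=> /andP[hxa hp] /andP[hxn hu] hx hl.
have ha : P a.
  apply/negP => hna.
  case/connectP: (hP _ _ hx hl) => q hq hlq.
  case: (rrel_path hq) => hq' hqa.
  apply: (bridge hxa hq' _ hp hxn (esym hlq)).
  rewrite inE negb_or; apply/andP; split.
    by apply/eqP => hax; move: hxn; rewrite hax inE eqxx.
  by apply/negP => haq; move/allP: hqa => /(_ _ haq).
by rewrite hx /=; apply: IH.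
Qed.

Lemma union_subtree P Q a : subtree P -> subtree Q -> P a -> Q a ->
  subtree (fun t => P t || Q t).
Proof.
move=> hP hQ hPa hQa.
have sP : subrel (rrel P) (connect (rrel (fun t => P t || Q t))).
  by move=> u v /and3P[h1 h2 h3]; apply: connect1; rewrite /rrel /= h1 h2 h3.
have sQ : subrel (rrel Q) (connect (rrel (fun t => P t || Q t))).
  by move=> u v /and3P[h1 h2 h3]; apply: connect1; rewrite /rrel /= h1 h2 h3 !orbT.
move=> u v hu hv; apply: (@connect_trans _ _ a).
  by case/orP: hu => hu; [apply: (connect_sub sP); apply: hP | apply: (connect_sub sQ); apply: hQ].
by case/orP: hv => hv; [apply: (connect_sub sP); apply: hP | apply: (connect_sub sQ); apply: hQ].
Qed.

Lemma subtree_all_path P u v p : subtree P -> P u -> P v ->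
  path tE u p -> uniq (u :: p) -> last u p = v -> all P (u :: p).
Proof. by move=> hP hu hv hp up hl; apply: subtree_upath => //; rewrite hl. Qed.

Lemma inter_subtree P Q : subtree P -> subtree Q -> subtree (fun t => P t && Q t).
Proof.
move=> hP hQ u v /andP[hPu hQu] /andP[hPv hQv].
case: (tree_upath u v) => p [hp up hl].
rewrite -hl; apply: conn_of_path => //.
have := subtree_all_path hP hPu hPv hp up hl.
have := subtree_all_path hQ hQu hQv hp up hl.
move=> h1 h2; have := conj h1 h2 => -[/allP a1 /allP a2].
by apply/allP => w hw; rewrite a1 // a2.
Qed.

Lemma predT_subtree : subtree (fun _ => true).
Proof.
move=> u v _ _; case: (tree_upath u v) => p [hp up <-].
by apply: conn_of_path => //; apply/allP.
Qed.

Lemma helly3 A B C : subtree A -> subtree B -> subtree C ->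
  (exists t, A t && B t) -> (exists t, A t && C t) -> (exists t, B t && C t) ->
  exists t, [&& A t, B t & C t].
Proof.
move=> hA hB hC [c /andP[hAc hBc]] [b /andP[hAb hCb]] [a /andP[hBa hCa]].
case: (tree_upath b c) => p [hp up hl].
have aA := subtree_all_path hA hAb hAc hp up hl.
have hU := union_subtree hC hB hCa hBa.
have aU := subtree_all_path hU (introT orP (or_introl hCb)) (introT orP (or_intror hBc)) hp up hl.
have hBl : B (last b p) by rewrite hl.
move: hBl aA aU hCb hAb hp; clear hl up.
elim: p b => [|u p IH] x hBl aA aU hCx hAx hp.
  by exists x; rewrite hAx hCx; rewrite /= in hBl; rewrite hBl.
case hBx: (B x); first by exists x; rewrite hAx hBx hCx.
move: hp aA aU => /= /andP[hxu hp] /andP[_ aA] /andP[_ aU].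
case hCu: (C u).
  apply: (IH u hBl aA aU hCu _ hp); by case/andP: aA.
have hBu : B u by case/andP: aU => /orP[] //; rewrite hCu.
exfalso.
case/connectP: (hC _ _ hCx hCa) => q hq hlq.
case/connectP: (hB _ _ hBu hBa) => r hr hlr.
case: (rrel_path hq) => hq' hqa.
case: (rrel_path hr) => hr' hra.
apply: (bridge hxu hq' _ hr' _); last by rewrite -hlq -hlr.
  rewrite inE negb_or; apply/andP; split.
    by apply/eqP => hux; move: hCx; rewrite -hux hCu.
  by apply/negP => huq; move/allP: hqa => /(_ _ huq); rewrite hCu.
rewrite inE negb_or; apply/andP; split.
  by apply/eqP => hux; move: hBu; rewrite -hux hBx.
by apply/negP => hxr; move/allP: hra => /(_ _ hxr); rewrite hBx.
Qed.

Lemma helly_aux (W : eqType) (F : W -> pred I) (s : seq W) : forall P : pred I,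
  subtree P -> (forall w, w \in s -> subtree (F w)) -> (exists t, P t) ->
  (forall w, w \in s -> exists t, P t && F w t) ->
  (forall w w', w \in s -> w' \in s -> exists t, F w t && F w' t) ->
  exists t, P t && all (fun w => F w t) s.
Proof.
elim: s => [|w s IH] P hP hF hne hPF hFF.
  by case: hne => t ht; exists t; rewrite ht.
have hw : w \in w :: s by rewrite inE eqxx.
have hs : forall w', w' \in s -> w' \in w :: s by move=> w' h; rewrite inE h orbT.
case: (IH (fun t => P t && F w t)).
- by apply: inter_subtree => //; apply: hF.
- by move=> w' h; apply: hF; apply: hs.
- by apply: hPF.
- move=> w' h; case: (helly3 hP (hF _ hw) (hF _ (hs _ h))).
  + by apply: hPF.
  + by apply: hPF; apply: hs.
  + by apply: hFF => //; apply: hs.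
  by move=> t /and3P[h1 h2 h3]; exists t; rewrite h1 h2 h3.
- by move=> w1 w2 h1 h2; apply: hFF; apply: hs.
by move=> t /andP[/andP[h1 h2] h3]; exists t; rewrite /= h1 h2 h3.
Qed.

End TreeFacts.

Lemma td_clique (W : finType) (adjW : rel W) (I : finType) (tE : rel I)
  (B : I -> {set W}) : is_tree_decomposition adjW tE B ->
  forall s : seq W, (forall x y, x \in s -> y \in s -> x != y -> adjW x y) ->
  exists t, all (fun x => x \in B t) s.
Proof.
move=> [htree hcov hedge hconn] s hcl.
case: (helly_aux htree (F := fun x t => x \in B t) (s := s) (P := fun _ => true)).
- exact: predT_subtree.
- by move=> w _ u v hu hv; apply: hconn.
- by case: (htree) => /card_gt0P [t _] _ _ _ _; exists t.
- by move=> w _; case: (hcov w) => t ht; exists t.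
- move=> w w' hw hw'; case: (eqVneq w w') => [<-|hne].
    by case: (hcov w) => t ht; exists t; rewrite ht.
  by case: (hedge _ _ (hcl _ _ hw hw' hne)) => t ht; exists t.
by move=> t /andP[_ h]; exists t.
Qed.

Section Main.
Variable V : finType.
Variable adj : rel V.
Hypothesis hsym : symmetric adj.
Hypothesis hirr : irreflexive adj.

Local Notation E := (edge_type adj).

Lemma edgeP (A : {set V}) : is_edge adj A ->
  exists x y, [/\ adj x y, x != y & A = [set x; y]].
Proof.
case/existsP => x /existsP [y /andP[hxy /eqP hA]]; exists x, y; split => //.
by apply/eqP => exy; move: hxy; rewrite exy hirr.
Qed.

Lemma meet (A B : {set V}) x : x \in A -> x \in B -> ~~ [disjoint A & B].
Proof. by move=> hA hB; rewrite -setI_eq0; apply/set0Pn; exists x; rewrite inE hA hB. Qed.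

Lemma meetP (A B : {set V}) : ~~ [disjoint A & B] -> exists x, x \in A /\ x \in B.
Proof. by rewrite -setI_eq0 => /set0Pn [x]; rewrite inE => /andP[h1 h2]; exists x. Qed.

Lemma two_eq (A : {set V}) x y : is_edge adj A -> x \in A -> y \in A -> x != y ->
  A = [set x; y].
Proof.
case/edgeP => a [b [hab hne hA]] hx hy hxy.
apply/eqP; rewrite eq_sym eqEcard; apply/andP; split.
  by apply/subsetP => z; rewrite !inE => /orP[] /eqP ->.
by rewrite hA !cards2 hne hxy.
Qed.

Lemma edge_adj (A : {set V}) x y : is_edge adj A -> x \in A -> y \in A -> x != y ->
  adj x y.
Proof.
case/edgeP => a [b [hab hne hA]]; rewrite hA !inE.
by case/orP => /eqP -> /orP[] /eqP -> //; rewrite ?eqxx // hsym.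
Qed.

Lemma pair_edge x y : adj x y -> is_edge adj [set x; y].
Proof. by move=> hxy; apply/existsP; exists x; apply/existsP; exists y; rewrite hxy eqxx. Qed.

Lemma indep_im (J : {set E}) : independent (L2adj adj) J ->
  induced_matching adj (val @: J).
Proof.
move=> hJ.
have hI : forall e f, e \in J -> f \in J -> L2adj adj e f = false.
  move=> e f he hf; apply/negbTE.
  by move/forallP: hJ => /(_ e) /implyP /(_ he) /forallP /(_ f) /implyP /(_ hf).
rewrite /induced_matching -andbA; apply/and3P; split.
- by apply/forallP => A; apply/implyP => /imsetP[e he ->]; exact: (valP e).
- apply/forallP => A; apply/implyP => /imsetP[e he ->].
  apply/forallP => B; apply/implyP => /imsetP[f hf ->].
  apply/implyP => hne.
  have hef : e != f by apply/eqP => eef; move: hne; rewrite eef eqxx.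
  move: (hI e f he hf); rewrite /L2adj hef /= => /negbT; rewrite negb_or.
  by case/andP => /negbNE.
- apply/forallP => x; apply/forallP => y; apply/implyP => /andP[/andP[hx hy] hxy].
  move: hx hy; rewrite /cover => /bigcupP [A /imsetP[e he ->] hx] /bigcupP [B /imsetP[f hf ->] hy].
  have hnxy : x != y by apply/eqP => exy; move: hxy; rewrite exy hirr.
  case: (eqVneq e f) => [eef|hne].
    rewrite -eef in hy; rewrite -(two_eq (valP e) hx hy hnxy); exact: imset_f.
  exfalso; move: (hI e f he hf); rewrite /L2adj hne /= => /negbT /negP; apply.
  apply/orP; right; apply/existsP.
  exists (exist (fun A => is_edge adj A) [set x; y] (pair_edge hxy)) => /=.
  by rewrite (meet (x := x)) ?(meet (x := y)) // !inE eqxx ?orbT.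
Qed.

Lemma valJ (M : {set {set V}}) : induced_matching adj M ->
  val @: [set e : E | val e \in M] = M.
Proof.
case/andP => /andP[/forallP hE _] _.
apply/setP => A; apply/imsetP/idP.
  by case=> e; rewrite inE => he ->.
move=> hA; have hAe := implyP (hE A) hA.
by exists (exist (fun A => is_edge adj A) A hAe); rewrite ?inE.
Qed.

Lemma im_indep (M : {set {set V}}) : induced_matching adj M ->
  independent (L2adj adj) [set e : E | val e \in M].
Proof.
case/andP => /andP[/forallP hE /forallP hD] /forallP hI.
apply/forallP => e; apply/implyP; rewrite inE => he.
apply/forallP => f; apply/implyP; rewrite inE => hf.
rewrite /L2adj; case: (eqVneq e f) => [//|hne] /=.
have hv : val e != val f by rewrite (inj_eq val_inj).
have hdis : [disjoint val e & val f].
  by move: (hD (val e)) => /implyP /(_ he) /forallP /(_ (val f)) /implyP /(_ hf) /implyP /(_ hv).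
rewrite hdis /=; apply/existsP => -[g /andP[h1 h2]].
case: (meetP h1) => x [hxg hxe]; case: (meetP h2) => y [hyg hyf].
have hnxy : x != y.
  by apply/eqP => exy; move: hdis; rewrite -exy in hyf; rewrite (negbTE (meet hxe hyf)).
have hxy : adj x y := edge_adj (valP g) hxg hyg hnxy.
have hxM : x \in cover M by apply/bigcupP; exists (val e).
have hyM : y \in cover M by apply/bigcupP; exists (val f).
have hP : [set x; y] \in M.
  by move: (hI x) => /forallP /(_ y) /implyP; apply; rewrite hxM hyM hxy.
have eq1 : [set x; y] = val e.
  apply/eqP; apply/negPn/negP => hn.
  move: (hD [set x; y]) => /implyP /(_ hP) /forallP /(_ (val e)) /implyP /(_ he) /implyP /(_ hn).
  by rewrite (negbTE (meet (x := x) _ hxe)) // !inE eqxx.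
have eq2 : [set x; y] = val f.
  apply/eqP; apply/negPn/negP => hn.
  move: (hD [set x; y]) => /implyP /(_ hP) /forallP /(_ (val f)) /implyP /(_ hf) /implyP /(_ hn).
  by rewrite (negbTE (meet (x := y) _ hyf)) // !inE eqxx orbT.
by move: hv; rewrite -eq1 -eq2 eqxx.
Qed.

Lemma alpha_le_mu (S : {set V}) (S' : {set E}) :
  (forall e, e \in S' -> ~~ [disjoint val e & S]) -> alpha (L2adj adj) S' <= mu adj S.
Proof.
move=> HS; rewrite /alpha; apply/bigmax_leqP => J /andP[hJ hsub].
rewrite -(card_imset J val_inj); apply: leq_bigmax_cond.
rewrite indep_im //=; apply/forallP => A; apply/implyP => /imsetP[e he ->].
by apply: HS; exact: (subsetP hsub).
Qed.

Lemma mu_le_alpha (S : {set V}) (S' : {set E}) :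
  (forall e : E, ~~ [disjoint val e & S] -> e \in S') -> mu adj S <= alpha (L2adj adj) S'.
Proof.
move=> HS; rewrite /mu; apply/bigmax_leqP => M /andP[hM hS].
rewrite -[in X in X <= _](valJ hM) (card_imset _ val_inj); apply: leq_bigmax_cond.
rewrite im_indep //=; apply/subsetP => e; rewrite inE => he; apply: HS.
by move/forallP: hS => /(_ (val e)) /implyP; apply.
Qed.

Definition bag1 (I : finType) (B : I -> {set V}) t : {set E} :=
  [set e : E | ~~ [disjoint val e & B t]].

Lemma dir1 k : has_width_at_most adj (mu adj) k ->
  has_width_at_most (L2adj adj) (alpha (L2adj adj)) k.
Proof.
move=> [I [tE [B [[htree hcov hedge hconn] hw]]]].
exists I, tE, (bag1 B); split; last first.
  by move=> t; apply: leq_trans (hw t); apply: alpha_le_mu => e; rewrite inE.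
split => //.
- move=> e; case: (edgeP (valP e)) => x [y [hxy hne he]].
  case: (hcov x) => t ht; exists t; rewrite inE; apply: (meet (x := x)) => //.
  by rewrite he !inE eqxx.
- move=> e f /andP[hne /orP[h|/existsP[g /andP[hg1 hg2]]]].
    case: (meetP h) => x [hx1 hx2]; case: (hcov x) => t ht; exists t.
    by rewrite !inE (meet hx1 ht) (meet hx2 ht).
  case: (edgeP (valP g)) => a [b [hab _ hg]]; case: (hedge a b hab) => t /andP[ha hb].
  have hsub : forall z, z \in val g -> z \in B t.
    by move=> z; rewrite hg !inE => /orP[] /eqP ->.
  exists t; rewrite !inE.
  case: (meetP hg1) => z [hz1 hz2]; case: (meetP hg2) => w [hw1 hw2].
  by rewrite (meet hz2 (hsub _ hz1)) (meet hw2 (hsub _ hw1)).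
- move=> e t1 t2; rewrite !inE => h1 h2.
  case: (edgeP (valP e)) => a [b [hab _ he]]; case: (hedge a b hab) => s /andP[ha hb].
  case: (meetP h1) => x [hx1 hx2]; case: (meetP h2) => y [hy1 hy2].
  have sub : forall x, x \in val e -> subrel [rel a b | [&& tE a b, x \in B a & x \in B b]]
      (connect [rel a b | [&& tE a b, e \in bag1 B a & e \in bag1 B b]]).
    move=> z hz u w /and3P[huw hu hw']; apply: connect1.
    by rewrite /= huw !inE (meet hz hu) (meet hz hw').
  have hs : forall z, z \in val e -> z \in B s.
    by move=> z; rewrite he !inE => /orP[] /eqP ->.
  apply: (@connect_trans _ _ s).
    exact: (connect_sub (sub x hx1) (hconn x t1 s hx2 (hs _ hx1))).
  exact: (connect_sub (sub y hy1) (hconn y s t2 (hs _ hy1) hy2)).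
Qed.

Definition bag2 (I : finType) (B : I -> {set E}) t : {set V} :=
  [set v | [forall e : E, (v \in val e) ==> (e \in B t)]].

Lemma dir2 k : has_width_at_most (L2adj adj) (alpha (L2adj adj)) k ->
  has_width_at_most adj (mu adj) k.
Proof.
move=> [I [tE [B [htd hw]]]].
have [htree hcov hedge hconn] := htd.
have hbag : forall v t (e : E), v \in bag2 B t -> v \in val e -> e \in B t.
  by move=> v t e; rewrite inE => /forallP /(_ e) /implyP.
exists I, tE, (bag2 B); split; last first.
  move=> t; apply: leq_trans (hw t); apply: mu_le_alpha => e /meetP [v [h1 h2]].
  exact: hbag _ _ _ h2 h1.
split => //.
- move=> v.
  case: (td_clique htd (s := [seq e : E <- enum [set: E] | v \in val e])).
    move=> e f; rewrite !mem_filter => /andP[he _] /andP[hf _] hne.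
    by rewrite /L2adj hne (meet he hf).
  move=> t /allP ht; exists t; rewrite inE; apply/forallP => e; apply/implyP => hve.
  by apply: ht; rewrite mem_filter hve mem_enum in_setT.
- move=> x y hxy.
  case: (td_clique htd (s := [seq e : E <- enum [set: E] | (x \in val e) || (y \in val e)])).
    move=> e f; rewrite !mem_filter => /andP[he _] /andP[hf _] hne.
    rewrite /L2adj hne /=; apply/orP; right; apply/existsP.
    exists (exist (fun A => is_edge adj A) [set x; y] (pair_edge hxy)) => /=.
    apply/andP; split.
      by case/orP: he => h; [apply: (meet (x := x)) | apply: (meet (x := y))]; rewrite // !inE eqxx ?orbT.
    by case/orP: hf => h; [apply: (meet (x := x)) | apply: (meet (x := y))]; rewrite // !inE eqxx ?orbT.
  move=> t /allP ht; exists t; rewrite !inE; apply/andP; split;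
    apply/forallP => e; apply/implyP => hve; apply: ht; rewrite mem_filter hve ?orbT mem_enum in_setT //.
- move=> v t1 t2 h1 h2.
  case: (tree_upath htree t1 t2) => p [hp up hl].
  rewrite -hl; apply: (conn_of_path (P := fun t => v \in bag2 B t)) => //.
  apply/allP => u hu; rewrite inE; apply/forallP => e; apply/implyP => hve.
  have := subtree_all_path htree (P := fun t => e \in B t) (hconn e) (hbag _ _ _ h1 hve)
    (hbag _ _ _ h2 hve) hp up hl.
  by move/allP => /(_ u hu).
Qed.

End Main.

Lemma min_ex (P : nat -> Prop) n : P n -> exists k, P k /\ forall j, P j -> k <= j.
Proof.
elim: n {-2}n (leqnn n) => [|n IH] m hm hP.
  exists m; split => // j _; by move: hm; rewrite leqn0 => /eqP ->.
case: (classic (exists j, j < m /\ P j)) => [[j [hjm hPj]]|hno].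
  by apply: (IH j) => //; rewrite -ltnS; apply: leq_trans hjm hm.
exists m; split => // j hPj; rewrite leqNgt; apply/negP => hjm; apply: hno; by exists j.
Qed.

Lemma lam_tw_spec (W : finType) (adjW : rel W) (lam : {set W} -> nat) :
  is_min_width adjW lam (lam_tw adjW lam).
Proof.
rewrite /lam_tw; apply: epsilon_spec.
case: (has_width_exists adjW lam) => k hk.
by case: (min_ex hk) => m [hm hmin]; exists m; split.
Qed.

Theorem mainTheorem5 (V : finType) (adj : rel V) :
  symmetric adj -> irreflexive adj ->
  mu_tw adj = alpha_tw (L2adj adj).
Proof.
move=> hsym hirr.
have [h1 m1] := lam_tw_spec adj (mu adj).
have [h2 m2] := lam_tw_spec (L2adj adj) (alpha (L2adj adj)).
rewrite /mu_tw /alpha_tw; apply/eqP; rewrite eqn_leq; apply/andP; split.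
  by apply: m1; apply: dir2.
by apply: m2; apply: dir1.
Qed.
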